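(* Let $G$ be a finite simple graph with $n$ vertices and minimum degree $\delta$ satisfying $230 \le \delta \le 1{,}000$. Then $$\gamma_s(G) \le \frac{\sqrt{\ln(\delta+1)\,(18.16 - 1.4\ln\delta)} + 0.25}{\sqrt{\delta+1}}\, n.$$
   Context: For a vertex $v$ of $G$, $N[v]$ denotes the closed neighbourhood of $v$ (i.e. $v$ together with its neighbours). A signed domination function of $G$ is a function $f: V(G) \to \{-1, 1\}$ such that $\sum_{x \in N[v]} f(x) \ge 1$ for every vertex $v \in V(G)$. The weight of $f$ is $f(V(G)) = \sum_{v \in V(G)} f(v)$. The signed domination number $\gamma_s(G)$ is the minimum weight of a signed domination function of $G$. *)

(* Defs.v *)
From mathcomp Require Import all_boot all_order all_algebra.
Set Implicit Arguments. Unset Strict Implicit. Unset Printing Implicit Defensive.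
Import Order.TTheory GRing.Theory Num.Theory.

Definition simple_graph (T : finType) (e : rel T) : Prop :=
  symmetric e /\ irreflexive e.

Definition closed_nbhd (T : finType) (e : rel T) (v : T) : {set T} :=
  v |: [set u | e v u].

Definition degree (T : finType) (e : rel T) (v : T) : nat := #|[set u | e v u]|.

Definition is_min_degree (T : finType) (e : rel T) (delta : nat) : Prop :=
  (exists v, degree e v = delta) /\ (forall v, delta <= degree e v)%N.

Definition pm1 (T : finType) (f : {ffun T -> int}) : bool :=
  [forall v, (f v == 1%R) || (f v == (-1)%R)].

Definition weight (T : finType) (f : {ffun T -> int}) : int :=
  (\sum_(v : T) f v)%R.

Definition signed_dom_fun (T : finType) (e : rel T) (f : {ffun T -> int}) : bool :=
  pm1 f && [forall v, (1 <= \sum_(x in closed_nbhd e v) f x)%R].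

Definition is_signed_dom_number (T : finType) (e : rel T) (g : int) : Prop :=
  (exists f, signed_dom_fun e f /\ weight f = g) /\
  (forall f, signed_dom_fun e f -> (g <= weight f)%R).

From Stdlib Require Import Reals.
Definition int_to_R (z : int) : R :=
  match z with Posz n => INR n | Negz n => Ropp (INR (S n)) end.

(* Main.v *)
Require Import Defs.
From mathcomp Require Import all_boot all_order all_algebra.
Import Order.TTheory GRing.Theory Num.Theory.
From mathcomp Require Import zify.
From Stdlib Require Reals QArith Qreals Qround Lra Lia ZArith.
From mathcomp Require Rstruct.

Module MA.
Set Implicit Arguments. Unset Strict Implicit. Unset Printing Implicit Defensive.
Lemma card_bigcup_le (T I : finType) (P : pred I) (A : I -> {set T}) :
  (#|\bigcup_(i | P i) A i| <= \sum_(i | P i) #|A i|)%N.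
Proof.
elim/big_rec2: _ => [|i U n _ IH]; first by rewrite cards0.
rewrite cardsU; lia.
Qed.

Lemma card_nbhd (T : finType) (e : rel T) v :
  simple_graph e -> #|closed_nbhd e v| = (degree e v).+1.
Proof.
move=> [_ irr]; rewrite /closed_nbhd cardsU1 /degree inE irr.
by [].
Qed.

Definition bad (T : finType) (e : rel T) (S : {set T}) v :=
  (degree e v < 2 * #|closed_nbhd e v :&: S|)%N.

Definition mkM (T : finType) (e : rel T) (S : {set T}) : {set T} :=
  [set x in S | ~~ [exists v, bad e S v && (x \in closed_nbhd e v)]].

Definition mkf (T : finType) (M : {set T}) : {ffun T -> int} :=
  [ffun x => if x \in M then (-1)%R else 1%R].

Lemma sum_mkf (T : finType) (M A : {set T}) :
  (\sum_(x in A) mkf M x = (#|A :\: M|)%:Z - (#|A :&: M|)%:Z)%R.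
Proof.
rewrite (bigID (fun x => x \in M)) /=.
rewrite (eq_bigr (fun _ => (-1)%R)); last by move=> x /andP[_ xM]; rewrite ffunE xM.
rewrite [X in (_ + X)%R](eq_bigr (fun _ => 1%R)); last first.
  by move=> x /andP[_ /negbTE xM]; rewrite ffunE xM.
rewrite !sumr_const addrC; congr (_ + _)%R.
  by rewrite natz; congr Posz; apply: eq_card => x; rewrite !inE andbC.
rewrite mulNrn natz; congr (- Posz _)%R.
by apply: eq_card => x; rewrite !inE.
Qed.

Lemma mkM_bad (T : finType) (e : rel T) (S : {set T}) v x :
  bad e S v -> x \in closed_nbhd e v -> x \notin mkM e S.
Proof.
move=> bv xN; rewrite /mkM inE negb_and negbK; apply/orP; right.
by apply/existsP; exists v; rewrite bv.
Qed.

Lemma mkM_sub (T : finType) (e : rel T) (S : {set T}) : mkM e S \subset S.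
Proof. by apply/subsetP => x; rewrite inE => /andP[]. Qed.

Lemma comb (T : finType) (e : rel T) (g : int) (S : {set T}) :
  simple_graph e -> is_signed_dom_number e g ->
  (g <= (#|T|)%:Z - 2 * (#|S|)%:Z +
        2 * \sum_(v | bad e S v) ((degree e v).+1)%:Z)%R.
Proof.
move=> sg [_ low].
set M := mkM e S.
have sdf : signed_dom_fun e (mkf M).
  apply/andP; split.
    by apply/forallP => x; rewrite ffunE; case: (x \in M).
  apply/forallP => v; rewrite sum_mkf.
  have cN := card_nbhd v sg.
  have cID := cardsID M (closed_nbhd e v).
  case: (boolP (bad e S v)) => bv.
    have E : closed_nbhd e v :&: M = set0.
      apply/setP => x; rewrite in_setI in_set0.
      by case: (boolP (x \in closed_nbhd e v)) => //= xN; apply/negbTE/(mkM_bad bv xN).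
    rewrite E cards0 in cID *; rewrite cN in cID; lia.
  have sub : (#|closed_nbhd e v :&: M| <= #|closed_nbhd e v :&: S|)%N.
    by apply: subset_leq_card; apply: setIS; apply: mkM_sub.
  move: bv; rewrite /bad -leqNgt => bv.
  lia.
have := low _ sdf.
have wt : weight (mkf M) = ((#|T|)%:Z - 2 * (#|M|)%:Z)%R.
  rewrite /weight.
  have := sum_mkf M setT.
  have -> : (\sum_(x in [set: T]) mkf M x = \sum_x mkf M x)%R.
    by apply: eq_bigl => x; rewrite inE.
  move=> ->.
  have := cardsID M setT; rewrite setTI cardsT. lia.
rewrite wt => H; apply: (le_trans H).
have cov : S \subset M :|: \bigcup_(v | bad e S v) closed_nbhd e v.
  apply/subsetP => x xS; rewrite in_setU.
  case: (boolP [exists v, bad e S v && (x \in closed_nbhd e v)]).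
    case/existsP => v /andP[bv xN]; apply/orP; right.
    by apply/bigcupP; exists v.
  by move=> Hn; rewrite /M /mkM inE xS Hn.
have h1 := subset_leq_card cov.
have h2 : (#|M :|: \bigcup_(v | bad e S v) closed_nbhd e v| <=
   #|M| + \sum_(v | bad e S v) ((degree e v).+1))%N.
  rewrite cardsU.
  have := card_bigcup_le (bad e S) (closed_nbhd e).
  rewrite (eq_bigr (fun v => (degree e v).+1)); last by move=> v _; exact: card_nbhd.
  lia.
have -> : (\sum_(v | bad e S v) ((degree e v).+1)%:Z = ((\sum_(v | bad e S v) ((degree e v).+1))%N)%:Z)%R.
  by rewrite -natz natr_sum; apply: eq_bigr => v _; rewrite natz.
lia.
Qed.

Section RS.
Local Open Scope ring_scope.
Definition wt (R : nzRingType) (p : R) (b : bool) : R := if b then p else 1 - p.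

Lemma expect (R : comNzRingType) (T : finType) (p : R) (h : T -> bool -> R) :
  \sum_(F : {ffun T -> bool}) \prod_x (wt p (F x) * h x (F x)) =
  \prod_x (p * h x true + (1 - p) * h x false).
Proof.
rewrite (eq_bigr (fun x => \sum_(b : bool) wt p b * h x b)); last first.
  by move=> x _; rewrite big_bool.
by rewrite bigA_distr_bigA.
Qed.

Lemma expect2 (R : comNzRingType) (T : finType) (p : R) (h : T -> bool -> R) :
  \sum_(F : {ffun T -> bool}) ((\prod_x wt p (F x)) * \prod_x h x (F x)) =
  \prod_x (p * h x true + (1 - p) * h x false).
Proof.
rewrite -expect; apply: eq_bigr => F _; by rewrite big_split.
Qed.

Lemma E1 (R : comNzRingType) (T : finType) (p : R) :
  \sum_(F : {ffun T -> bool}) \prod_x wt p (F x) = 1.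
Proof.
transitivity (\sum_(F : {ffun T -> bool}) ((\prod_x wt p (F x)) * \prod_(x : T) (fun _ _ => 1 : R) x (F x))).
  by apply: eq_bigr => F _; rewrite [X in _ = _ * X]big1 ?mulr1.
rewrite (expect2 p (fun _ _ => 1)); apply: big1 => x _; rewrite !mulr1; by rewrite addrC subrK.
Qed.

Lemma E2 (R : comNzRingType) (T : finType) (p : R) (y : T) :
  \sum_(F : {ffun T -> bool}) (\prod_x wt p (F x)) * (F y)%:R = p.
Proof.
transitivity (\sum_(F : {ffun T -> bool}) ((\prod_x wt p (F x)) * \prod_(x : T) (fun x b => if x == y then (b%:R : R) else 1) x (F x))).
  apply: eq_bigr => F _; congr (_ * _); rewrite (bigD1 y) //= eqxx big1 ?mulr1 //.
  by move=> x /negbTE ->.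
rewrite (expect2 p (fun x b => if x == y then (b%:R : R) else 1)) (bigD1 y) //= eqxx big1 ?mulr1 ?mulr0 ?addr0 //.
by move=> x /negbTE ->; rewrite !mulr1 addrC subrK.
Qed.

Lemma E3 (R : comNzRingType) (T : finType) (p t : R) (A : {set T}) :
  \sum_(F : {ffun T -> bool}) (\prod_x wt p (F x)) *
      \prod_x (if (x \in A) && F x then t else 1) = (1 - p + p * t) ^+ #|A|.
Proof.
rewrite (expect2 p (fun x b => if (x \in A) && b then t else 1)).
rewrite (eq_bigr (fun x => if x \in A then 1 - p + p * t else 1)); last first.
  by move=> x _; case: (x \in A) => /=; rewrite !mulr1 addrC // subrK.
by rewrite -big_mkcond /= prodr_const.
Qed.

Lemma mono (R : realFieldType) (q : R) (a m : nat) :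
  0 <= q -> q * a.+2%:R <= a.+1%:R -> (a.+1 <= m)%N ->
  m%:R * q ^+ m <= a.+1%:R * q ^+ a.+1.
Proof.
move=> q0 qa; elim: m => [//|m IH] lem.
case: (ltngtP a.+1 m.+1) => [lt||->] //; last by rewrite ltnNge lem.
have := IH lt; have step : m.+1%:R * q <= m%:R.
  have [k ->] : exists k, m = (a.+1 + k)%N by exists (m - a.+1)%N; lia.
  have k0 : 0 <= k%:R :> R by apply: ler0n.
  have q1 : q <= 1.
    have : q * a.+2%:R <= 1 * a.+2%:R by apply: (le_trans qa); rewrite mul1r ler_nat.
    by rewrite ler_pM2r // ltr0n.
  have qk : q * k%:R <= k%:R by rewrite -[leRHS]mul1r ler_wpM2r.
  have -> : (a.+1 + k).+1 = (a.+2 + k)%N by [].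
  rewrite !natrD mulrDl [_ * q]mulrC [k%:R * q]mulrC.
  by apply: lerD.
move=> H; rewrite exprS mulrA.
apply: le_trans H; apply: ler_wpM2r; first exact: exprn_ge0.
exact: step.
Qed.

Lemma intr_natR (R : nzRingType) (n : nat) : ((n%:Z)%:~R : R) = n%:R.
Proof. by []. Qed.

Definition Yf (R : realFieldType) (T : finType) (e : rel T) (s : R)
  (F : {ffun T -> bool}) : R :=
  #|T|%:R - 2 * \sum_x (F x)%:R +
  2 * \sum_v ((degree e v).+1%:R / s ^+ (degree e v).+1 *
      \prod_x (if (x \in closed_nbhd e v) && F x then s ^+ 2 else 1)).

Lemma step1 (R : realFieldType) (T : finType) (e : rel T) (g : int) (s : R)
  (F : {ffun T -> bool}) :
  simple_graph e -> is_signed_dom_number e g -> 1 <= s ->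
  g%:~R <= Yf e s F.
Proof.
move=> sg sd s1.
set S := [set x | F x].
have H := comb S sg sd.
have s0 : 0 < s by apply: lt_le_trans s1.
rewrite -(ler_int R) !intrD !intrM intrN intrM !intr_natR in H.
apply: (le_trans H); rewrite /Yf.
have cS : (\sum_x (F x)%:R : R) = #|S|%:R.
  rewrite -sum1_card natr_sum [RHS]big_mkcond /=; apply: eq_bigr => x _.
  by rewrite inE; case: (F x).
rewrite cS lerD2l.
have -> : (\sum_(v | bad e S v) ((degree e v).+1)%:Z)%:~R =
          \sum_(v | bad e S v) ((degree e v).+1)%:R :> R.
  by rewrite rmorph_sum.
apply: ler_wpM2l => //.
rewrite big_mkcond /=; apply: ler_sum => v _.
have pr : \prod_x (if (x \in closed_nbhd e v) && F x then s ^+ 2 else 1) =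
          (s ^+ 2) ^+ #|closed_nbhd e v :&: S|.
  rewrite -big_mkcond /= prodr_const; congr (_ ^+ _).
  by apply: eq_card => x; rewrite in_setI /S [in RHS]inE -topredE /=.
rewrite pr.
have sp : 0 < s ^+ (degree e v).+1 by apply: exprn_gt0.
case: ifP => bv.
  rewrite -exprM -mulrA -[X in X <= _]mulr1; apply: ler_wpM2l => //.
  rewrite mulrC ler_pdivlMr // mul1r; apply: ler_weXn2l => //.
apply: mulr_ge0; first by apply: divr_ge0 => //; apply: ltW.
by apply: exprn_ge0; apply: exprn_ge0; apply: ltW.
Qed.

Lemma EY (R : realFieldType) (T : finType) (e : rel T) (p s : R) :
  simple_graph e -> s != 0 ->
  \sum_(F : {ffun T -> bool}) (\prod_x wt p (F x)) * Yf e s F =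
  #|T|%:R - 2 * (#|T|%:R * p) +
  2 * \sum_v ((degree e v).+1%:R * ((1 - p + p * s ^+ 2) / s) ^+ (degree e v).+1).
Proof.
move=> sg sn0.
rewrite /Yf.
under eq_bigr => F _ do rewrite mulrDr mulrBr.
rewrite big_split sumrB /=.
rewrite -mulr_suml E1 mul1r.
congr (_ - _ + _).
  under eq_bigr => F _ do rewrite mulrCA mulr_sumr.
  rewrite -mulr_sumr exchange_big /=; congr (_ * _).
  under eq_bigr => x _ do rewrite E2.
  rewrite sumr_const.
  by rewrite mulr_natl.
under eq_bigr => F _ do rewrite mulrCA mulr_sumr.
rewrite -mulr_sumr exchange_big /=; congr (_ * _).
apply: eq_bigr => v _.
under eq_bigr => F _ do rewrite mulrCA.
rewrite -mulr_sumr E3 card_nbhd // expr_div_n.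
by rewrite mulrA [_ / _ * _]mulrAC mulrA.
Qed.

Lemma prob (R : realFieldType) (T : finType) (e : rel T) (g : int) (a : nat) (p s : R) :
  simple_graph e -> is_signed_dom_number e g -> (forall v, (a <= degree e v)%N) ->
  0 <= p -> p <= 1 -> 1 <= s ->
  ((1 - p + p * s ^+ 2) / s) * a.+2%:R <= a.+1%:R ->
  g%:~R <= #|T|%:R * (1 - 2 * p + 2 * (a.+1%:R * ((1 - p + p * s ^+ 2) / s) ^+ a.+1)).
Proof.
move=> sg sd deg p0 p1 s1 qa.
set q := (1 - p + p * s ^+ 2) / s.
have s0 : 0 < s by apply: lt_le_trans s1.
have q0 : 0 <= q.
  apply: divr_ge0; last exact: ltW.
  apply: addr_ge0; first by rewrite subr_ge0.
  by apply: mulr_ge0 => //; apply: exprn_ge0; apply: ltW.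
have -> : (g%:~R : R) = \sum_(F : {ffun T -> bool}) (\prod_x wt p (F x)) * g%:~R.
  by rewrite -mulr_suml E1 mul1r.
apply: (@le_trans _ _ (\sum_(F : {ffun T -> bool}) (\prod_x wt p (F x)) * Yf e s F)).
  apply: ler_sum => F _; apply: ler_wpM2l; last exact: step1.
  by apply: prodr_ge0 => x _; rewrite /wt; case: (F x) => //; rewrite subr_ge0.
rewrite EY //; last by rewrite gt_eqF.
have -> : #|T|%:R * (1 - 2 * p + 2 * (a.+1%:R * q ^+ a.+1)) =
   #|T|%:R - 2 * (#|T|%:R * p) + 2 * (#|T|%:R * (a.+1%:R * q ^+ a.+1)) :> R.
  by rewrite mulrDr mulrBr mulr1 [_ * (2 * p)]mulrCA [_ * (2 * (_ * _))]mulrCA.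
rewrite lerD2l; apply: ler_wpM2l => //.
rewrite mulr_natl -sumr_const; apply: ler_sum => v _.
by apply: mono => //; rewrite ltnS.
Qed.

End RS.
End MA.

Module MB.
Import Reals QArith Qreals Qround Lra Lia ZArith.
Local Open Scope R_scope.

Definition Dq : positive := Pos.pow 2 80.
Definition rdn (x : Q) : Q := Qmake (Qfloor (x * Qmake (Zpos Dq) 1)) Dq.
Definition rup (x : Q) : Q := Qmake (Qceiling (x * Qmake (Zpos Dq) 1)) Dq.

Lemma Q2R_make z d : Q2R (Qmake z d) = IZR z / IZR (Zpos d).
Proof. reflexivity. Qed.

Lemma Q2R_injZ z : Q2R (inject_Z z) = IZR z.
Proof. unfold Q2R, inject_Z; simpl. field. Qed.

Lemma Dpos : 0 < IZR (Zpos Dq).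
Proof. apply IZR_lt; reflexivity. Qed.

Lemma Q2R_D x : Q2R (x * Qmake (Zpos Dq) 1) = Q2R x * IZR (Zpos Dq).
Proof. rewrite Q2R_mult Q2R_make. field. Qed.

Lemma rdn_le x : Q2R (rdn x) <= Q2R x.
Proof.
unfold rdn; rewrite Q2R_make.
pose proof (Qle_Rle _ _ (Qfloor_le (x * Qmake (Zpos Dq) 1))) as H.
rewrite Q2R_injZ Q2R_D in H.
pose proof Dpos.
apply (Rmult_le_reg_r (IZR (Zpos Dq))); auto.
unfold Rdiv; rewrite Rmult_assoc (Rinv_l _ (Rgt_not_eq _ _ Dpos)); lra.
Qed.

Lemma rdn_nonneg x : 0 <= Q2R x -> 0 <= Q2R (rdn x).
Proof.
intro H0. unfold rdn; rewrite Q2R_make.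
pose proof Dpos.
assert (0 <= Q2R x * IZR (Zpos Dq)) by (apply Rmult_le_pos; lra).
assert (Hz : (0 <= Qfloor (x * Qmake (Zpos Dq) 1))%Z).
{ destruct (Z_lt_le_dec (Qfloor (x * Qmake (Zpos Dq) 1)) 0) as [Hl|Hl]; auto.
  exfalso.
  pose proof (Qlt_floor (x * Qmake (Zpos Dq) 1)) as H3.
  apply Qlt_Rlt in H3. rewrite Q2R_injZ Q2R_D plus_IZR in H3.
  assert (Hle : (Qfloor (x * Qmake (Zpos Dq) 1) + 1 <= 0)%Z) by lia.
  apply IZR_le in Hle. rewrite plus_IZR in Hle. lra. }
apply IZR_le in Hz.
unfold Rdiv; apply Rmult_le_pos; [lra | left; apply Rinv_0_lt_compat; lra].
Qed.

Lemma rup_ge x : Q2R x <= Q2R (rup x).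
Proof.
unfold rup; rewrite Q2R_make.
pose proof (Qle_Rle _ _ (Qle_ceiling (x * Qmake (Zpos Dq) 1))) as H.
rewrite Q2R_injZ Q2R_D in H.
pose proof Dpos.
apply (Rmult_le_reg_r (IZR (Zpos Dq))); auto.
unfold Rdiv; rewrite Rmult_assoc (Rinv_l _ (Rgt_not_eq _ _ Dpos)); lra.
Qed.

Fixpoint sqchain (k : nat) (r : Q) : Q :=
  match k with O => r | S k => sqchain k (rdn (r * r)) end.

Lemma sqchain_ok : forall k r w, 0 <= Q2R r -> Q2R r <= exp w ->
  Q2R (sqchain k r) <= exp (w * 2 ^ k).
Proof.
induction k as [|k IH]; intros r w H0 H1; simpl.
- rewrite Rmult_1_r; exact H1.
- replace (w * (2 * 2 ^ k)) with ((w + w) * 2 ^ k) by ring.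
  apply IH.
  + apply rdn_nonneg; rewrite Q2R_mult; apply Rmult_le_pos; lra.
  + eapply Rle_trans; [apply rdn_le|]. rewrite Q2R_mult exp_plus.
    apply Rmult_le_compat; lra.
Qed.

Lemma exp_lower z k : 0 <= Q2R (1 + z) ->
  Q2R (sqchain k (1 + z)) <= exp (Q2R z * 2 ^ k).
Proof.
intro H. apply sqchain_ok; auto.
rewrite Q2R_plus. replace (Q2R 1) with 1 by (unfold Q2R; simpl; field).
apply exp_ineq1_le.
Qed.

Fixpoint powup (q : Q) (m : nat) : Q :=
  match m with O => 1%Q | S m => rup (q * powup q m) end.

Lemma powup_ok q m : 0 <= Q2R q -> Q2R q ^ m <= Q2R (powup q m).
Proof.
intro H; induction m as [|m IH]; simpl.
- unfold Q2R; simpl; lra.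
- eapply Rle_trans; [|apply rup_ge]. rewrite Q2R_mult.
  apply Rmult_le_compat_l; auto.
Qed.

Lemma ln_ge_of (x y : R) : 0 < x -> exp y <= x -> y <= ln x.
Proof.
intros Hx H. destruct (Rle_or_lt y (ln x)) as [|Hl]; auto.
apply exp_increasing in Hl. rewrite exp_ln in Hl; lra.
Qed.

Lemma ln_le_of (x y : R) : 0 < x -> x <= exp y -> ln x <= y.
Proof.
intros Hx H. destruct (Rle_or_lt (ln x) y) as [|Hl]; auto.
apply exp_increasing in Hl. rewrite exp_ln in Hl; lra.
Qed.

Lemma ln_mono (x y : R) : 0 < x -> x <= y -> ln x <= ln y.
Proof.
intros Hx H. destruct H as [H|H]; [left; apply ln_increasing; auto | subst; lra].
Qed.
Definition cfun (d : nat) : R :=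
  (sqrt (ln (INR d + 1) * (18.16 - 1.4 * ln (INR d))) + 0.25) / sqrt (INR d + 1).

Local Open Scope Q_scope.
Definition P30 : Q := inject_Z (2 ^ 30).

Definition chk (a b : nat) (p s LA LB r SB E : Q) : bool :=
  let A1 := inject_Z (Z.of_nat a + 1) in
  let B := inject_Z (Z.of_nat b) in
  let q := ((1 - p + p * (s * s)) / s)%Q in
  (Qle_bool 1 (A1 * sqchain 30 (1 + (- LA / P30))) &&
  Qle_bool 0 (1 + (- LA / P30)) &&
  Qle_bool B (sqchain 30 (1 + LB / P30)) && Qle_bool 0 (1 + LB / P30) &&
  Qle_bool 0 LA && Qle_bool 0 ((1816 # 100) - (14 # 10) * LB) && Qle_bool 0 r &&
  Qle_bool (r * r) (LA * ((1816 # 100) - (14 # 10) * LB)) &&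
  Qle_bool 1 SB && Qle_bool (B + 1) (SB * SB) &&
  Qle_bool 0 p && Qle_bool p 1 && Qle_bool 1 s &&
  Qle_bool (q * (A1 + 1)) A1 &&
  Qle_bool (powup q (S a)) E &&
  Qle_bool ((1 - 2 * p + 2 * (A1 * E)) * SB) (r + (1 # 4)))%bool.

Local Close Scope Q_scope.
Local Open Scope R_scope.
Lemma Q2R1 : Q2R 1 = 1. Proof. unfold Q2R; simpl; field. Qed.
Lemma Q2R0 : Q2R 0 = 0. Proof. unfold Q2R; simpl; field. Qed.
Lemma Q2R2 : Q2R 2 = 2. Proof. unfold Q2R; simpl; field. Qed.
Lemma Q2RA1 a : Q2R (inject_Z (Z.of_nat a + 1)) = INR a + 1.
Proof. rewrite Q2R_injZ plus_IZR -INR_IZR_INZ; reflexivity. Qed.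
Lemma Q2RB b : Q2R (inject_Z (Z.of_nat b)) = INR b.
Proof. rewrite Q2R_injZ -INR_IZR_INZ; reflexivity. Qed.
Lemma Q2RP30 : Q2R P30 = 2 ^ 30.
Proof. unfold P30; rewrite Q2R_injZ. replace (2 ^ 30)%Z with 1073741824%Z by reflexivity. simpl. ring. Qed.

Lemma qle x y : Qle_bool x y = true -> Q2R x <= Q2R y.
Proof. intro H; apply Qle_Rle; apply Qle_bool_iff; exact H. Qed.

Lemma chk_sound a b p s LA LB r SB E : (1 <= a)%nat ->
  chk a b p s LA LB r SB E = true ->
  let pr := Q2R p in let sr := Q2R s in
  let qr := (1 - pr + pr * (sr * sr)) / sr in
  0 <= pr /\ pr <= 1 /\ 1 <= sr /\ qr * (INR a + 2) <= INR a + 1 /\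
  (forall d, (a <= d <= b)%nat ->
     1 - 2 * pr + 2 * ((INR a + 1) * qr ^ (S a)) <= cfun d).
Proof.
unfold chk. intros Ha1 H.
case/andP: H => H h16.
case/andP: H => H h15.
case/andP: H => H h14.
case/andP: H => H h13.
case/andP: H => H h12.
case/andP: H => H h11.
case/andP: H => H h10.
case/andP: H => H h9.
case/andP: H => H h8.
case/andP: H => H h7.
case/andP: H => H h6.
case/andP: H => H h5.
case/andP: H => H h4.
case/andP: H => H h3.
case/andP: H => h1 h2.
apply qle in h1, h2, h3, h4, h5, h6, h7, h8, h9, h10, h11, h12, h13, h14, h15, h16.
rewrite Q2R0 in h2 h4 h5 h6 h7 h11.
assert (P30nz : ~ (P30 == 0)%Q) by (unfold P30, Qeq; simpl; lia).
assert (snz : ~ (s == 0)%Q).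
{ intro Hs. apply Qeq_eqR in Hs. rewrite Q2R1 in h13. rewrite Hs Q2R0 in h13. lra. }
assert (C1 : Q2R (1816 # 100) = 18.16) by (unfold Q2R; simpl; lra).
assert (C2 : Q2R (14 # 10) = 1.4) by (unfold Q2R; simpl; lra).
assert (C3 : Q2R (1 # 4) = 0.25) by (unfold Q2R; simpl; lra).
assert (Eq : Q2R ((1 - p + p * (s * s)) / s) = (1 - Q2R p + Q2R p * (Q2R s * Q2R s)) / Q2R s).
{ rewrite (Q2R_div _ _ snz) Q2R_plus Q2R_minus !Q2R_mult Q2R1. reflexivity. }
assert (ELA : exp (Q2R LA) <= INR a + 1).
{ pose proof (exp_lower (- LA / P30) 30 h2) as He.
  rewrite (Q2R_div _ _ P30nz) Q2R_opp Q2RP30 in He.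
  replace (- Q2R LA / 2 ^ 30 * 2 ^ 30) with (- Q2R LA) in He by (field; apply pow_nonzero; lra).
  rewrite exp_Ropp in He.
  rewrite Q2R1 Q2R_mult Q2RA1 in h1.
  set c0 := Q2R (sqchain 30 (1 + - LA / P30)) in h1 He *.
  pose proof (exp_pos (Q2R LA)) as Hp.
  assert (0 < c0).
  { destruct (Rle_or_lt c0 0) as [Hc|Hc]; auto.
    assert (0 <= INR a + 1) by (pose proof (pos_INR a); lra).
    assert ((INR a + 1) * c0 <= 0) by nra. lra. }
  apply Rmult_le_reg_r with (/ exp (Q2R LA)).
  { apply Rinv_0_lt_compat; lra. }
  rewrite Rinv_r; last lra.
  eapply Rle_trans; [exact h1|]. apply Rmult_le_compat_l; [pose proof (pos_INR a); lra | exact He]. }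
assert (ELB : INR b <= exp (Q2R LB)).
{ pose proof (exp_lower (LB / P30) 30 h4) as He.
  rewrite (Q2R_div _ _ P30nz) Q2RP30 in He.
  replace (Q2R LB / 2 ^ 30 * 2 ^ 30) with (Q2R LB) in He by (field; apply pow_nonzero; lra).
  rewrite Q2RB in h3. lra. }
rewrite Q2R_minus Q2R_mult in h6.
rewrite Q2R_mult Q2R_mult Q2R_minus Q2R_mult in h8.
rewrite Q2R1 in h9 h12 h13.
rewrite Q2R_mult Q2R_plus Q2RB Q2R1 in h10.
rewrite Q2R_mult Eq Q2R_plus !Q2RA1 Q2R1 in h14.
rewrite Q2R_mult Q2R_plus Q2R_minus Q2R_mult Q2R_mult Q2R_mult Q2RA1 Q2R1 Q2R2 Q2R_plus in h16.
cbv zeta.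
set (pr := Q2R p) in *. set (sr := Q2R s) in *.
set (qr := (1 - pr + pr * (sr * sr)) / sr) in *.
assert (qpos : 0 <= qr).
{ unfold qr. apply Rmult_le_pos; [| left; apply Rinv_0_lt_compat; lra]. assert (0 <= pr * (sr * sr)) by (apply Rmult_le_pos; nra). lra. }
assert (hq : qr ^ S a <= Q2R E).
{ eapply Rle_trans; [| exact h15]. rewrite -Eq. apply powup_ok. rewrite Eq. exact qpos. }
split; [lra|]. split; [lra|]. split; [lra|]. split; [lra|].
intros d Hd; move: Hd => /andP[/ssrnat.leP Had /ssrnat.leP Hdb]; move/ssrnat.leP: Ha1 => Ha1.
assert (Hd1 : INR a + 1 <= INR d + 1) by (apply le_INR in Had; lra).
assert (Hdb' : INR d <= INR b) by (apply le_INR; exact Hdb).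
assert (Hd0 : 0 < INR d) by (apply lt_0_INR; lia).
assert (Ha0 : 0 < INR a + 1) by (pose proof (pos_INR a); lra).
assert (L1 : Q2R LA <= ln (INR d + 1)).
{ eapply Rle_trans; [apply ln_ge_of; [exact Ha0 | exact ELA]|].
  apply ln_mono; lra. }
assert (L2 : ln (INR d) <= Q2R LB).
{ eapply Rle_trans; [apply ln_mono; [exact Hd0 | exact Hdb']|].
  apply ln_le_of; [lra | exact ELB]. }
assert (X1 : Q2R r * Q2R r <= ln (INR d + 1) * (18.16 - 1.4 * ln (INR d))).
{ eapply Rle_trans; [exact h8|]. apply Rmult_le_compat; lra. }
assert (S1 : Q2R r <= sqrt (ln (INR d + 1) * (18.16 - 1.4 * ln (INR d)))).
{ rewrite -(sqrt_square (Q2R r)); last lra. apply sqrt_le_1_alt. exact X1. }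
assert (S2 : sqrt (INR d + 1) <= Q2R SB).
{ rewrite -(sqrt_square (Q2R SB)); last lra. apply sqrt_le_1_alt. lra. }
assert (S3 : 0 < sqrt (INR d + 1)) by (apply sqrt_lt_R0; lra).
assert (K1 : 1 - 2 * pr + 2 * ((INR a + 1) * qr ^ S a) <=
             1 - 2 * pr + 2 * ((INR a + 1) * Q2R E)).
{ assert ((INR a + 1) * qr ^ S a <= (INR a + 1) * Q2R E) by (apply Rmult_le_compat_l; lra). lra. }
eapply Rle_trans; [exact K1|].
set (K := 1 - 2 * pr + 2 * ((INR a + 1) * Q2R E)) in *.
unfold cfun.
set (sq := sqrt (ln (INR d + 1) * (18.16 - 1.4 * ln (INR d)))) in *.
set (sd := sqrt (INR d + 1)) in *.
apply Rmult_le_reg_r with sd; [exact S3|].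
unfold Rdiv; rewrite Rmult_assoc Rinv_l; last lra.
destruct (Rle_or_lt K 0) as [Kn|Kp].
- assert (0 <= sq) by (unfold sq; apply sqrt_pos). nra.
- assert (K * sd <= K * Q2R SB) by (apply Rmult_le_compat_l; lra). lra.
Qed.
End MB.

Module MC.
Import Rstruct Reals Lra MA.
Set Implicit Arguments. Unset Strict Implicit. Unset Printing Implicit Defensive.
Lemma int_to_RE (g : int) : int_to_R g = @intmul R (GRing.one R) g.
Proof.
case: g => n; first by rewrite /int_to_R INRE.
by rewrite /int_to_R INRE NegzE mulrNz.
Qed.

Lemma R2E : (2 : R) = @GRing.natmul R (GRing.one R) 2.
Proof. by rewrite (IZRposE 2) INRE. Qed.

Lemma probR (T : finType) (e : rel T) (g : int) (a : nat) (p s : R) :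
  simple_graph e -> is_signed_dom_number e g -> (forall v, (a <= degree e v)%N) ->
  (0 <= p)%R -> (p <= 1)%R -> (1 <= s)%R ->
  ((1 - p + p * (s * s)) / s * (INR a + 2) <= INR a + 1)%R ->
  (int_to_R g <= INR #|T| * (1 - 2 * p + 2 * ((INR a + 1) * ((1 - p + p * (s * s)) / s) ^ (S a))))%R.
Proof.
move=> sg sd deg p0 p1 s1 qa.
have ea1 : (INR a + 1)%R = @GRing.natmul R (GRing.one R) a.+1 by rewrite -INRE S_INR.
have ea2 : (INR a + 2)%R = @GRing.natmul R (GRing.one R) a.+2 by rewrite -INRE !S_INR; lra.
rewrite ea1 ea2 in qa *.
have H := @prob R T e g a p s sg sd deg.
rewrite int_to_RE.
apply/RleP.
rewrite !RealsE (_ : nat_of_pos 2 = 2%N) // -expr2.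
apply: H.
- by apply/RleP.
- by apply/RleP.
- by apply/RleP.
- apply/RleP; move: qa; rewrite !RealsE -expr2.
  by [].
Qed.

End MC.

Module MD.
Import Reals QArith MB MC.
Lemma chunk_final (T : finType) (e : rel T) (delta : nat) (g : int)
  (a b : nat) (p s LA LB r SB E : Q) :
  chk a b p s LA LB r SB E = true -> leq 1 a -> leq a delta && leq delta b ->
  simple_graph e -> (forall v, leq delta (degree e v)) ->
  is_signed_dom_number e g ->
  (int_to_R g <= cfun delta * INR #|T|)%R.
Proof.
move=> H a1 ad sg deg sd.
have [p0 [p1 [s1 [qa K]]]] := chk_sound _ _ _ _ _ _ _ _ _ a1 H.
have deg' : forall v, leq a (degree e v).
  by move=> v; apply: leq_trans (deg v); case/andP: ad.
have Hp := probR sg sd deg' p0 p1 s1 qa.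
have Kd := K delta ad.
have n0 := pos_INR #|T|.
apply: Rle_trans Hp _.
apply: Rle_trans (Rmult_le_compat_l _ _ _ n0 Kd) _; rewrite Rmult_comm; exact: Rle_refl.
Qed.


Lemma chunk1 (T : finType) (e : rel T) (delta : nat) (g : int) :
  (leq 230 delta && leq delta 375) -> simple_graph e -> (forall v, leq delta (degree e v)) ->
  is_signed_dom_number e g -> (int_to_R g <= cfun delta * INR #|T|)%R.
Proof.
move=> H sg deg sd.
have hc : chk 230 375 (76161 # 250000) (1511 # 1000) (340151 # 62500) (370433 # 62500) (7326303 # 1000000) (19390721 # 1000000) (4908073 # 1000000000000000) = true by vm_compute; reflexivity.
exact: (@chunk_final T e delta g 230 375 (76161 # 250000) (1511 # 1000) (340151 # 62500) (370433 # 62500) (7326303 # 1000000) (19390721 # 1000000) (4908073 # 1000000000000000) hc isT H sg deg sd).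
Qed.

Lemma chunk2 (T : finType) (e : rel T) (delta : nat) (g : int) :
  (leq 376 delta && leq delta 589) -> simple_graph e -> (forall v, leq delta (degree e v)) ->
  is_signed_dom_number e g -> (int_to_R g <= cfun delta * INR #|T|)%R.
Proof.
move=> H sg deg sd.
have hc : chk 376 589 (42817 # 125000) (277 # 200) (1483061 # 250000) (1594607 # 250000) (1479943 # 200000) (24289917 # 1000000) (2813889 # 1000000000000000) = true by vm_compute; reflexivity.
exact: (@chunk_final T e delta g 376 589 (42817 # 125000) (277 # 200) (1483061 # 250000) (1594607 # 250000) (1479943 # 200000) (24289917 # 1000000) (2813889 # 1000000000000000) hc isT H sg deg sd).
Qed.

Lemma chunk3 (T : finType) (e : rel T) (delta : nat) (g : int) :
  (leq 590 delta && leq delta 894) -> simple_graph e -> (forall v, leq delta (degree e v)) ->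
  is_signed_dom_number e g -> (int_to_R g <= cfun delta * INR #|T|)%R.
Proof.
move=> H sg deg sd.
have hc : chk 590 894 (371677 # 1000000) (13 # 10) (1276363 # 200000) (6795707 # 1000000) (7428137 # 1000000) (3739569 # 125000) (901001 # 500000000000000) = true by vm_compute; reflexivity.
exact: (@chunk_final T e delta g 590 894 (371677 # 1000000) (13 # 10) (1276363 # 200000) (6795707 # 1000000) (7428137 # 1000000) (3739569 # 125000) (901001 # 500000000000000) hc isT H sg deg sd).
Qed.

Lemma chunk4 (T : finType) (e : rel T) (delta : nat) (g : int) :
  (leq 895 delta && leq delta 1000) -> simple_graph e -> (forall v, leq delta (degree e v)) ->
  is_signed_dom_number e g -> (int_to_R g <= cfun delta * INR #|T|)%R.
Proof.
move=> H sg deg sd.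
have hc : chk 895 1000 (375999 # 1000000) (161 # 125) (6797939 # 1000000) (6907757 # 1000000) (379831 # 50000) (15819293 # 500000) (7 # 15625000000000) = true by vm_compute; reflexivity.
exact: (@chunk_final T e delta g 895 1000 (375999 # 1000000) (161 # 125) (6797939 # 1000000) (6907757 # 1000000) (379831 # 50000) (15819293 # 500000) (7 # 15625000000000) hc isT H sg deg sd).
Qed.
End MD.

From Stdlib Require Import Reals.

Theorem corollary3 (T : finType) (e : rel T) (delta : nat) (g : int) :
  simple_graph e ->
  is_min_degree e delta ->
  (230 <= delta <= 1000)%N ->
  is_signed_dom_number e g ->
  (int_to_R g <=
     (sqrt (ln (INR delta + 1) * (18.16 - 1.4 * ln (INR delta))) + 0.25)
       / sqrt (INR delta + 1) * INR #|T|)%R.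
Proof.
move=> sg [_ deg] /andP[h1 h2] sd.
rewrite -/(MB.cfun delta).
have [c|[c|[c|c]]] : ((230 <= delta <= 375)%nat \/ (376 <= delta <= 589)%nat \/
   (590 <= delta <= 894)%nat \/ (895 <= delta <= 1000)%nat) by lia.
- exact: (@MD.chunk1 T e delta g c sg deg sd).
- exact: (@MD.chunk2 T e delta g c sg deg sd).
- exact: (@MD.chunk3 T e delta g c sg deg sd).
- exact: (@MD.chunk4 T e delta g c sg deg sd).
Qed.
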